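(* Let $L$ be the free nilpotent Lie algebra of index $4$ on $X$, i.e. the free Lie algebra on $X$ modulo the ideal spanned by all Lie monomials of degree $\ge 4$ (equivalently, the free Lie algebra in the variety defined by $[[[a,b],c],d]=0$). Then the Lie algebra homomorphism $L\to \mathcal{A}s_3\langle X\rangle^{(-)}$ which is the identity on $X$ is injective; that is, $L$ embeds into the free third-type associative algebra $\mathcal{A}s_3\langle X\rangle$ equipped with the commutator $[a,b]=ab-ba$.
   Context: An associative algebra is called of the third type if it satisfies $abc+bac-bca-cba=0$ for all $a,b,c$. $\mathcal{A}s_3\langle X\rangle$ is the free such algebra on a countable set $X$ over a field of characteristic $0$, and $\mathcal{A}s_3\langle X\rangle^{(-)}$ denotes the same vector space with product $[a,b]=ab-ba$, which is a Lie algebra. *)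

(* Defs.v *)
From mathcomp Require Import all_boot all_algebra.
Set Implicit Arguments. Unset Strict Implicit. Unset Printing Implicit Defensive.
Import GRing.Theory.
Local Open Scope ring_scope.

(* Formal expressions of a (non-unital, non-associative) algebra over F on the
   countable set of generators X = nat, with one bilinear product Mul.
   A variety of algebras is given by a relation R of defining identities
   (already closed under substitution, since its constructors quantify over
   all expressions); the relatively free algebra of the variety on X is
   expr F modulo the congruence [alg_congr R] below (vector space axioms,
   bilinearity of Mul, compatibility with all operations, and R). *)
Inductive expr (F : Type) : Type :=
| Var of nat
| Zero
| Add of expr F & expr F
| Scale of F & expr F
| Mul of expr F & expr F.
Arguments Zero {F}.

Inductive alg_congr (F : fieldType) (R : expr F -> expr F -> Prop) :
  expr F -> expr F -> Prop :=
| ac_rel x y : R x y -> alg_congr R x y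
| ac_refl x : alg_congr R x x
| ac_sym x y : alg_congr R x y -> alg_congr R y x
| ac_trans x y z : alg_congr R x y -> alg_congr R y z -> alg_congr R x z
| ac_Add x x' y y' : alg_congr R x x' -> alg_congr R y y' ->
    alg_congr R (Add x y) (Add x' y')
| ac_Scale c x x' : alg_congr R x x' -> alg_congr R (Scale c x) (Scale c x')
| ac_Mul x x' y y' : alg_congr R x x' -> alg_congr R y y' ->
    alg_congr R (Mul x y) (Mul x' y')
| ac_addA x y z : alg_congr R (Add x (Add y z)) (Add (Add x y) z)
| ac_addC x y : alg_congr R (Add x y) (Add y x)
| ac_add0 x : alg_congr R (Add x Zero) x
| ac_addN x : alg_congr R (Add x (Scale (-1) x)) Zero
| ac_scale1 x : alg_congr R (Scale 1 x) x
| ac_scaleA c d x : alg_congr R (Scale c (Scale d x)) (Scale (c * d) x)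
| ac_scaleDr c x y : alg_congr R (Scale c (Add x y)) (Add (Scale c x) (Scale c y))
| ac_scaleDl c d x : alg_congr R (Scale (c + d) x) (Add (Scale c x) (Scale d x))
| ac_mulDl x y z : alg_congr R (Mul (Add x y) z) (Add (Mul x z) (Mul y z))
| ac_mulDr x y z : alg_congr R (Mul x (Add y z)) (Add (Mul x y) (Mul x z))
| ac_mulZl c x y : alg_congr R (Mul (Scale c x) y) (Scale c (Mul x y))
| ac_mulZr c x y : alg_congr R (Mul x (Scale c y)) (Scale c (Mul x y)).

Inductive lie_nil4_rel (F : fieldType) : expr F -> expr F -> Prop :=
| lr_alt x : lie_nil4_rel (Mul x x) Zero
| lr_jacobi x y z :
    lie_nil4_rel (Add (Add (Mul (Mul x y) z) (Mul (Mul y z) x)) (Mul (Mul z x) y)) Zero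
| lr_nil4 x y z w : lie_nil4_rel (Mul (Mul (Mul x y) z) w) Zero.

Inductive as3_rel (F : fieldType) : expr F -> expr F -> Prop :=
| ar_assoc x y z : as3_rel (Mul (Mul x y) z) (Mul x (Mul y z))
| ar_third a b c :
    as3_rel (Add (Add (Add (Mul (Mul a b) c) (Mul (Mul b a) c))
                      (Scale (-1) (Mul (Mul b c) a)))
                 (Scale (-1) (Mul (Mul c b) a))) Zero.

Definition lie4_eq (F : fieldType) := alg_congr (@lie_nil4_rel F).
Definition as3_eq (F : fieldType) := alg_congr (@as3_rel F).

Fixpoint lie_to_as (F : fieldType) (e : expr F) : expr F :=
  match e with
  | Var n => Var F n
  | Zero => Zero
  | Add a b => Add (lie_to_as a) (lie_to_as b)
  | Scale c a => Scale c (lie_to_as a)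
  | Mul a b => Add (Mul (lie_to_as a) (lie_to_as b))
                   (Scale (-1) (Mul (lie_to_as b) (lie_to_as a)))
  end.

(* Main.v *)
Require Import Defs.
From mathcomp Require Import all_boot all_algebra.
From Stdlib Require Import Setoid Morphisms.
From mathcomp Require Import ring.
Set Implicit Arguments. Unset Strict Implicit. Unset Printing Implicit Defensive.
Import GRing.Theory.
Local Open Scope ring_scope.

#[global] Instance ac_Equiv (F : fieldType) (R : expr F -> expr F -> Prop) : Equivalence (alg_congr R).
Proof. split; [exact: ac_refl | exact: ac_sym | exact: ac_trans]. Qed.
#[global] Instance Add_Proper (F : fieldType) (R : expr F -> expr F -> Prop) :
  Proper (alg_congr R ==> alg_congr R ==> alg_congr R) (@Add F).
Proof. by move=> ? ? ? ? ? ?; apply: ac_Add. Qed.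
#[global] Instance Scale_Proper (F : fieldType) (R : expr F -> expr F -> Prop) c :
  Proper (alg_congr R ==> alg_congr R) (@Scale F c).
Proof. by move=> ? ? ?; apply: ac_Scale. Qed.
#[global] Instance Mul_Proper (F : fieldType) (R : expr F -> expr F -> Prop) :
  Proper (alg_congr R ==> alg_congr R ==> alg_congr R) (@Mul F).
Proof. by move=> ? ? ? ? ? ?; apply: ac_Mul. Qed.

Local Notation "x ~[ R ] y" := (alg_congr R x y) (at level 70).

Section Gen.
Implicit Types (F : fieldType).

Lemma add0l F R (x : expr F) : Add Zero x ~[R] x.
Proof. rewrite ac_addC ac_add0; reflexivity. Qed.

Lemma addNl F R (x : expr F) : Add (Scale (-1) x) x ~[R] Zero.
Proof. rewrite ac_addC ac_addN; reflexivity. Qed.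

Lemma canc F R (x : expr F) : x ~[R] Add x x -> x ~[R] Zero.
Proof.
move=> H. symmetry. rewrite -(ac_addN R x). rewrite {1}H.
rewrite -ac_addA ac_addN ac_add0; reflexivity.
Qed.

Lemma scale0 F R (x : expr F) : Scale 0 x ~[R] Zero.
Proof. apply: canc. rewrite -ac_scaleDl addr0; reflexivity. Qed.

Lemma scaleZ F R (c : F) : Scale c (@Zero F) ~[R] Zero.
Proof. rewrite -{1}(scale0 R (@Zero F)) ac_scaleA mulr0 scale0; reflexivity. Qed.

Lemma mul0l F R (y : expr F) : Mul Zero y ~[R] Zero.
Proof. rewrite -{1}(scale0 R Zero) ac_mulZl scale0; reflexivity. Qed.

Lemma mul0r F R (y : expr F) : Mul y Zero ~[R] Zero.
Proof. rewrite -{1}(scale0 R Zero) ac_mulZr scale0; reflexivity. Qed.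

Lemma swap4 F R (a b c d : expr F) :
  Add (Add a b) (Add c d) ~[R] Add (Add a c) (Add b d).
Proof.
rewrite -!ac_addA. apply: ac_Add; first reflexivity.
rewrite ac_addA (ac_addC R b c) -ac_addA. reflexivity.
Qed.

Lemma opp_of_sum F R (a b : expr F) : Add a b ~[R] Zero -> b ~[R] Scale (-1) a.
Proof.
move=> H. rewrite -(add0l R b) -(addNl R a) -ac_addA H ac_add0. reflexivity.
Qed.

Definition N3 F (P Q S : expr F) (a b c : F) :=
  Add (Add (Scale a P) (Scale b Q)) (Scale c S).

Lemma N3_ext F R (P Q S : expr F) a b c a' b' c' :
  a = a' -> b = b' -> c = c' -> N3 P Q S a b c ~[R] N3 P Q S a' b' c'.
Proof. move=> -> -> ->; reflexivity. Qed.

Lemma N3_addE F R (P Q S : expr F) x y a b c a' b' c' :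
  x ~[R] N3 P Q S a b c -> y ~[R] N3 P Q S a' b' c' ->
  Add x y ~[R] N3 P Q S (a + a') (b + b') (c + c').
Proof.
move=> -> ->; rewrite /N3 !ac_scaleDl.
rewrite (swap4 R (Add (Scale a P) (Scale b Q))).
rewrite (swap4 R (Scale a P)). reflexivity.
Qed.

Lemma N3_scaleE F R (P Q S : expr F) x k a b c :
  x ~[R] N3 P Q S a b c -> Scale k x ~[R] N3 P Q S (k * a) (k * b) (k * c).
Proof. move=> ->; rewrite /N3 !ac_scaleDr !ac_scaleA. reflexivity. Qed.

Lemma N3_0E F R (P Q S : expr F) x : x ~[R] Zero -> x ~[R] N3 P Q S 0 0 0.
Proof. move=> ->; rewrite /N3 !scale0 !ac_add0. reflexivity. Qed.

Lemma N3_PE F R (P Q S : expr F) x : x ~[R] P -> x ~[R] N3 P Q S 1 0 0.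
Proof. move=> ->; rewrite /N3 !scale0 !ac_add0 ac_scale1. reflexivity. Qed.

Lemma N3_QE F R (P Q S : expr F) x : x ~[R] Q -> x ~[R] N3 P Q S 0 1 0.
Proof. move=> ->; rewrite /N3 !scale0 ac_add0 add0l ac_scale1. reflexivity. Qed.

Lemma N3_SE F R (P Q S : expr F) x : x ~[R] S -> x ~[R] N3 P Q S 0 0 1.
Proof. move=> ->; rewrite /N3 !scale0 ac_add0 add0l ac_scale1. reflexivity. Qed.

Lemma N3_cmp F R (P Q S : expr F) x y a b c a' b' c' :
  x ~[R] N3 P Q S a b c -> y ~[R] N3 P Q S a' b' c' ->
  a = a' -> b = b' -> c = c' -> x ~[R] y.
Proof. move=> -> -> -> -> ->; reflexivity. Qed.

End Gen.

Ltac lin := first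
  [ eapply N3_addE; lin
  | eapply N3_scaleE; lin
  | apply: N3_0E; reflexivity
  | apply: N3_PE; reflexivity
  | apply: N3_QE; reflexivity
  | apply: N3_SE; reflexivity ].

Ltac lin_eq P Q S :=
  eapply (@N3_cmp _ _ P Q S); [lin | lin | ring | ring | ring].

Lemma lin_test (F : fieldType) R (P Q S : expr F) :
  Add P (Scale (-1) (Add Q P)) ~[R] Scale (-1) Q.
Proof. lin_eq P Q S. Qed.

Local Notation "x ≃ y" := (alg_congr (@lie_nil4_rel _) x y) (at level 70).

Lemma anti (F : fieldType) (x y : expr F) : Mul y x ≃ Scale (-1) (Mul x y).
Proof.
apply: opp_of_sum. symmetry.
transitivity (Mul (Add x y) (Add x y)); first by symmetry; exact: ac_rel (lr_alt _).
rewrite ac_mulDl !ac_mulDr (ac_rel (lr_alt x)) (ac_rel (lr_alt y)).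
lin_eq (Mul x y) (Mul y x) (@Zero F).
Qed.

Lemma jac (F : fieldType) (y a b : expr F) :
  Add (Mul (Mul y a) b) (Scale (-1) (Mul (Mul y b) a)) ≃ Mul y (Mul a b).
Proof.
have J := ac_rel (lr_jacobi y a b).
rewrite (anti y (Mul a b)) (anti y b) ac_mulZl in J.
transitivity (Add (Add (Add (Mul (Mul y a) b) (Scale (-1) (Mul y (Mul a b))))
   (Scale (-1) (Mul (Mul y b) a))) (Mul y (Mul a b))).
  lin_eq (Mul (Mul y a) b) (Mul (Mul y b) a) (Mul y (Mul a b)).
rewrite J add0l; reflexivity.
Qed.

Definition D2 (F : fieldType) (e : expr F) := forall y z, Mul (Mul e y) z ≃ Zero.
Definition D3 (F : fieldType) (e : expr F) := forall y, Mul e y ≃ Zero.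
Definition S2 (F : fieldType) (f : expr F) := forall e, D2 e -> Mul e f ≃ Zero.

Lemma D3_eq (F : fieldType) (e e' : expr F) : e ≃ e' -> D3 e -> D3 e'.
Proof. move=> H D y; rewrite -H; exact: D. Qed.
Lemma D3_Add (F : fieldType) (e e' : expr F) : D3 e -> D3 e' -> D3 (Add e e').
Proof. move=> D D' y; rewrite ac_mulDl D D' ac_add0; reflexivity. Qed.
Lemma D3_Scale (F : fieldType) c (e : expr F) : D3 e -> D3 (Scale c e).
Proof. move=> D y; rewrite ac_mulZl D scaleZ; reflexivity. Qed.
Lemma D3_Zero (F : fieldType) : D3 (@Zero F).
Proof. move=> y; exact: mul0l. Qed.
Lemma D3_r (F : fieldType) (e y : expr F) : D3 e -> Mul y e ≃ Zero.
Proof. move=> D; rewrite anti D scaleZ; reflexivity. Qed.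
Lemma D3_mull (F : fieldType) (e y : expr F) : D2 e -> D3 (Mul e y).
Proof. by move=> D z; apply: D. Qed.
Lemma D3_mulr (F : fieldType) (e y : expr F) : D2 e -> D3 (Mul y e).
Proof. move=> D z; rewrite (anti e y) ac_mulZl D scaleZ; reflexivity. Qed.

Lemma D2_Mul (F : fieldType) (x y : expr F) : D2 (Mul x y).
Proof. move=> z w; exact: ac_rel (lr_nil4 _ _ _ _). Qed.
Lemma D2_Add (F : fieldType) (e e' : expr F) : D2 e -> D2 e' -> D2 (Add e e').
Proof. move=> D D' y z; rewrite ac_mulDl ac_mulDl D D' ac_add0; reflexivity. Qed.
Lemma D2_Scale (F : fieldType) c (e : expr F) : D2 e -> D2 (Scale c e).
Proof. move=> D y z; rewrite !ac_mulZl D scaleZ; reflexivity. Qed.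
Lemma D2_Zero (F : fieldType) : D2 (@Zero F).
Proof. move=> y z; rewrite mul0l mul0l; reflexivity. Qed.

Lemma S2_Mul (F : fieldType) (x y : expr F) : S2 (Mul x y).
Proof.
move=> e D. have J := ac_rel (lr_jacobi x y e).
rewrite (D x y) ac_add0 (anti e y) ac_mulZl (D y x) scaleZ ac_add0 in J.
rewrite anti J scaleZ; reflexivity.
Qed.
Lemma S2_Add (F : fieldType) (e e' : expr F) : S2 e -> S2 e' -> S2 (Add e e').
Proof. move=> D D' y Dy; rewrite ac_mulDr D // D' // ac_add0; reflexivity. Qed.
Lemma S2_Scale (F : fieldType) c (e : expr F) : S2 e -> S2 (Scale c e).
Proof. move=> D y Dy; rewrite ac_mulZr D // scaleZ; reflexivity. Qed.
Lemma S2_Zero (F : fieldType) : S2 (@Zero F).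
Proof. move=> y _; exact: mul0r. Qed.

Record M (F : fieldType) := mkM
  { m1 : expr F; m2 : expr F; mr : expr F -> expr F; m3 : expr F }.

Fixpoint Psi (F : fieldType) (e : expr F) : M F :=
  match e with
  | Var n => mkM (Var F n) Zero (fun _ => Zero) Zero
  | Zero => mkM Zero Zero (fun _ => Zero) Zero
  | Add x y => let u := Psi x in let v := Psi y in
      mkM (Add (m1 u) (m1 v)) (Add (m2 u) (m2 v))
          (fun w => Add (mr u w) (mr v w)) (Add (m3 u) (m3 v))
  | Scale c x => let u := Psi x in
      mkM (Scale c (m1 u)) (Scale c (m2 u)) (fun w => Scale c (mr u w))
          (Scale c (m3 u))
  | Mul x y => let u := Psi x in let v := Psi y in
      mkM Zero (Mul (m1 u) (m1 v)) (fun w => Mul (Mul w (m1 u)) (m1 v))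
          (Add (mr v (m1 u)) (Mul (m2 u) (m1 v)))
  end.

Definition Meq (F : fieldType) (u v : M F) :=
  [/\ m1 u ≃ m1 v, m2 u ≃ m2 v, m3 u ≃ m3 v &
      forall y y', y ≃ y' -> mr u y ≃ mr v y'].

Definition good (F : fieldType) (u : M F) :=
  [/\ forall y y', y ≃ y' -> mr u y ≃ mr u y',
      forall y z, mr u (Add y z) ≃ Add (mr u y) (mr u z) &
      forall c y, mr u (Scale c y) ≃ Scale c (mr u y)].

Lemma good_Psi (F : fieldType) (x : expr F) : good (Psi x).
Proof.
elim: x => [n| |x [P1 A1 S1] y [P2 A2 S2']|c x [P1 A1 S1]|x _ y _] /=.
- split=> *; [reflexivity | symmetry; exact: ac_add0 | symmetry; exact: scaleZ].
- split=> *; [reflexivity | symmetry; exact: ac_add0 | symmetry; exact: scaleZ].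
- split.
  + by move=> y0 y0' H /=; rewrite (P1 _ _ H) (P2 _ _ H); reflexivity.
  + move=> y0 z /=; rewrite A1 A2 swap4; reflexivity.
  + move=> c y0 /=; rewrite S1 S2' ac_scaleDr; reflexivity.
- split.
  + by move=> y0 y0' H /=; rewrite (P1 _ _ H); reflexivity.
  + move=> y0 z /=; rewrite A1 ac_scaleDr; reflexivity.
  + move=> d y0 /=; rewrite S1 !ac_scaleA mulrC; reflexivity.
- split.
  + move=> y0 y0' H /=; rewrite H; reflexivity.
  + move=> y0 z /=; rewrite ac_mulDl ac_mulDl; reflexivity.
  + move=> d y0 /=; rewrite !ac_mulZl; reflexivity.
Qed.

Lemma good_r0 (F : fieldType) (u : M F) : good u -> mr u Zero ≃ Zero.
Proof.
case=> P A _; apply: canc. rewrite -A. apply: P. symmetry; exact: ac_add0.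
Qed.

Lemma Meq_pt (F : fieldType) (u v : M F) : good v ->
  m1 u ≃ m1 v -> m2 u ≃ m2 v -> m3 u ≃ m3 v -> (forall y, mr u y ≃ mr v y) ->
  Meq u v.
Proof.
case=> P _ _ H1 H2 H3 H4; split=> // y y' H. rewrite H4. exact: P.
Qed.

Lemma Meq_sym (F : fieldType) (u v : M F) : Meq u v -> Meq v u.
Proof.
case=> H1 H2 H3 H4; split; try by symmetry.
move=> y y' H; symmetry; apply: H4; symmetry; exact: H.
Qed.

Lemma Meq_trans (F : fieldType) (u v w : M F) : Meq u v -> Meq v w -> Meq u w.
Proof.
case=> H1 H2 H3 H4 [G1 G2 G3 G4]; split.
- by rewrite H1.
- by rewrite H2.
- by rewrite H3.
- move=> y y' H; rewrite (H4 _ _ H). apply: G4; reflexivity.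
Qed.

Ltac zsimp := do 4 rewrite ?mul0l ?mul0r ?scaleZ ?ac_add0 ?add0l.

Lemma sound (F : fieldType) (x y : expr F) : as3_eq x y -> Meq (Psi x) (Psi y).
Proof.
elim=> {x y}.
- move=> x y [] {x y}.
  + move=> x y z. apply: Meq_pt; first exact: good_Psi.
    * reflexivity.
    * simpl. zsimp. reflexivity.
    * simpl. rewrite (good_r0 (good_Psi z)). zsimp. reflexivity.
    * move=> w /=. zsimp. reflexivity.
  + move=> a b c. apply: Meq_pt; first exact: good_Psi.
    * simpl. zsimp. reflexivity.
    * simpl. zsimp. reflexivity.
    * simpl. rewrite (good_r0 (good_Psi a)) (good_r0 (good_Psi c)).
      rewrite (anti (m1 (Psi a)) (m1 (Psi b))) (anti (m1 (Psi b)) (m1 (Psi c))).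
      rewrite !ac_mulZl. zsimp.
      lin_eq (Mul (Mul (m1 (Psi a)) (m1 (Psi b))) (m1 (Psi c)))
             (Mul (Mul (m1 (Psi b)) (m1 (Psi c))) (m1 (Psi a))) (@Zero F).
    * move=> w /=. zsimp. reflexivity.
- move=> x; apply: Meq_pt; try reflexivity; exact: good_Psi.
- by move=> x y _; apply: Meq_sym.
- by move=> x y z _ H1 _ H2; apply: Meq_trans H1 H2.
- move=> x x' y y' _ [H1 H2 H3 H4] _ [G1 G2 G3 G4]; split=> /=.
  + rewrite H1 G1; reflexivity.
  + rewrite H2 G2; reflexivity.
  + rewrite H3 G3; reflexivity.
  + move=> w w' H; rewrite (H4 _ _ H) (G4 _ _ H); reflexivity.
- move=> c x x' _ [H1 H2 H3 H4]; split=> /=.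
  + rewrite H1; reflexivity.
  + rewrite H2; reflexivity.
  + rewrite H3; reflexivity.
  + move=> w w' H; rewrite (H4 _ _ H); reflexivity.
- move=> x x' y y' _ [H1 H2 H3 H4] _ [G1 G2 G3 G4]; split=> /=.
  + reflexivity.
  + rewrite H1 G1; reflexivity.
  + rewrite (G4 _ _ H1) H2 G1; reflexivity.
  + move=> w w' H; rewrite H H1 G1; reflexivity.
- move=> x y z; apply: Meq_pt; first exact: good_Psi; move=> /=; try move=> w /=; exact: ac_addA.
- move=> x y; apply: Meq_pt; first exact: good_Psi; move=> /=; try move=> w /=; exact: ac_addC.
- move=> x; apply: Meq_pt; first exact: good_Psi; move=> /=; try move=> w /=; exact: ac_add0.
- move=> x; apply: Meq_pt; first exact: good_Psi; move=> /=; try move=> w /=; exact: ac_addN.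
- move=> x; apply: Meq_pt; first exact: good_Psi; move=> /=; try move=> w /=; exact: ac_scale1.
- move=> c d x; apply: Meq_pt; first exact: good_Psi; move=> /=; try move=> w /=; exact: ac_scaleA.
- move=> c x y; apply: Meq_pt; first exact: good_Psi; move=> /=; try move=> w /=; exact: ac_scaleDr.
- move=> c d x; apply: Meq_pt; first exact: good_Psi; move=> /=; try move=> w /=; exact: ac_scaleDl.
- move=> x y z; apply: Meq_pt; first exact: good_Psi.
  + simpl; symmetry; exact: ac_add0.
  + exact: ac_mulDl.
  + case: (good_Psi z) => _ A _ /=. rewrite A ac_mulDl swap4; reflexivity.
  + move=> w /=; rewrite ac_mulDr ac_mulDl; reflexivity.
- move=> x y z; apply: Meq_pt; first exact: good_Psi.
  + simpl; symmetry; exact: ac_add0.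
  + exact: ac_mulDr.
  + simpl. rewrite ac_mulDr swap4; reflexivity.
  + move=> w /=; rewrite ac_mulDr; reflexivity.
- move=> c x y; apply: Meq_pt; first exact: good_Psi.
  + simpl; symmetry; exact: scaleZ.
  + exact: ac_mulZl.
  + case: (good_Psi y) => _ _ S /=. rewrite S ac_mulZl ac_scaleDr; reflexivity.
  + move=> w /=; rewrite ac_mulZr ac_mulZl; reflexivity.
- move=> c x y; apply: Meq_pt; first exact: good_Psi.
  + simpl; symmetry; exact: scaleZ.
  + exact: ac_mulZr.
  + simpl. rewrite ac_mulZr ac_scaleDr; reflexivity.
  + move=> w /=; rewrite ac_mulZr; reflexivity.
Qed.

Ltac lin_eqf P Q S :=
  eapply (@N3_cmp _ _ P Q S); [lin | lin | .. ].

Definition Inv (F : fieldType) (u : M F) :=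
  [/\ forall y, mr u y ≃ Scale 2^-1 (Mul y (m2 u)), D2 (m2 u), S2 (m2 u) & D3 (m3 u)].

Definition rec (F : fieldType) (u : M F) :=
  Add (Add (m1 u) (Scale 2^-1 (m2 u))) (Scale 3^-1 (m3 u)).

Lemma regroup (F : fieldType) (a b c d e f : expr F) :
  Add (Add (Add a b) (Add c d)) (Add e f) ≃ Add (Add (Add a c) e) (Add (Add b d) f).
Proof. rewrite (swap4 _ a b c d) swap4; reflexivity. Qed.

Lemma main (F : fieldType) (h2 : (2 : F) != 0) (h3 : (3 : F) != 0) (a : expr F) :
  Inv (Psi (lie_to_as a)) /\ a ≃ rec (Psi (lie_to_as a)).
Proof.
have nz : ((2:F) != 0) && ((3:F) != 0) by rewrite h2 h3.
elim: a => [n| |a [[rU D2U S2U D3U] hA] b [[rV D2V S2V D3V] hB]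
            |c a [[rU D2U S2U D3U] hA]|a [[rU D2U S2U D3U] hA] b [[rV D2V S2V D3V] hB]] /=.
- split; first split.
  + move=> y; rewrite mul0r scaleZ; reflexivity.
  + exact: D2_Zero.
  + exact: S2_Zero.
  + exact: D3_Zero.
  + rewrite /rec /= !scaleZ !ac_add0; reflexivity.
- split; first split.
  + move=> y; rewrite mul0r scaleZ; reflexivity.
  + exact: D2_Zero.
  + exact: S2_Zero.
  + exact: D3_Zero.
  + rewrite /rec /= !scaleZ !ac_add0; reflexivity.
- split; first split.
  + move=> y /=; rewrite rU rV ac_mulDr ac_scaleDr; reflexivity.
  + exact: D2_Add.
  + exact: S2_Add.
  + exact: D3_Add.
  + rewrite /rec /= !ac_scaleDr regroup; apply: ac_Add; [exact: hA | exact: hB].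
- split; first split.
  + move=> y /=; rewrite rU ac_mulZr !ac_scaleA mulrC; reflexivity.
  + exact: D2_Scale.
  + exact: S2_Scale.
  + exact: D3_Scale.
  + rewrite /rec /= !ac_scaleA (mulrC 2^-1) (mulrC 3^-1) -!ac_scaleA -!ac_scaleDr.
    apply: ac_Scale; exact: hA.
- set U := Psi (lie_to_as a) in rU D2U S2U D3U hA *.
  set V := Psi (lie_to_as b) in rV D2V S2V D3V hB *.
  split; first split.
  + move=> y /=. rewrite jac ac_mulDr ac_mulZr (anti (m1 U) (m1 V)) ac_mulZr.
    lin_eqf (Mul y (Mul (m1 U) (m1 V))) (m1 U) (m1 V); field; rewrite ?h2 ?h3 //.
  + apply: D2_Add; [exact: D2_Mul | apply: D2_Scale; exact: D2_Mul].
  + apply: S2_Add; [exact: S2_Mul | apply: S2_Scale; exact: S2_Mul].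
  + apply: D3_Add; last apply: D3_Scale; apply: D3_Add.
    * apply: D3_eq; first by symmetry; apply: rV.
      apply: D3_Scale; exact: D3_mulr.
    * exact: D3_mull.
    * apply: D3_eq; first by symmetry; apply: rU.
      apply: D3_Scale; exact: D3_mulr.
    * exact: D3_mull.
  + transitivity (Mul (rec U) (rec V)); first by apply: ac_Mul.
    rewrite /rec /= rU rV.
    rewrite !ac_mulDl !ac_mulDr !ac_mulZl !ac_mulZr.
    rewrite !D3U !(D3_r _ D3V) (S2V _ D2U).
    rewrite (anti (m1 U) (m1 V)) (anti (m2 U) (m1 V)) (anti (m1 U) (m2 V)).
    lin_eqf (Mul (m1 U) (m1 V)) (Mul (m1 U) (m2 V)) (Mul (m2 U) (m1 V));
      field; rewrite ?h2 ?h3 //.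
Qed.

Theorem mainTheorem7 (F : fieldType) (charF0 : [pchar F] =i pred0)
  (a b : expr F) :
  as3_eq (lie_to_as a) (lie_to_as b) -> lie4_eq a b.
Proof.
move=> H.
have [h2 h3] : (2 : F) != 0 /\ (3 : F) != 0.
  by have := charF0 2; have := charF0 3; rewrite !inE /= => -> ->.
have [H1 H2 H3 _] := sound H.
have [_ ha] := main h2 h3 a; have [_ hb] := main h2 h3 b.
rewrite /lie4_eq ha hb /rec H1 H2 H3; reflexivity.
Qed.
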